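(* Let $A$ be a coherent reduced B\'ezout commutative ring and $E$ a non-zero FP-injective $A$-module such that every finitely generated submodule of $E$ is cyclic. Then for any $x,y\in E$ there exist $z\in E$ and an invertible $2\times 2$ matrix $B$ with entries in $A$ such that $\binom{z}{0}=B\binom{x}{y}$.
   Context: A ring is coherent if all its finitely generated ideals are finitely presented, and B\'ezout if every finitely generated ideal is principal. A module $E$ is FP-injective if $\mathrm{Ext}^1(F,E)=0$ for all finitely presented modules $F$. *)

(* Defs.v *)
From HB Require Import structures.
From mathcomp Require Import all_boot all_order all_algebra.
Set Implicit Arguments. Unset Strict Implicit. Unset Printing Implicit Defensive.
Import GRing.Theory.
Local Open Scope ring_scope.

Definition fg_subset_free (A : comPzRingType) (n : nat) (P : ('I_n -> A) -> Prop) :=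
  exists (m : nat) (h : 'I_m -> 'I_n -> A),
    forall c : 'I_n -> A,
      P c <-> exists d : 'I_m -> A, forall i, c i = \sum_(j < m) d j * h j i.

Definition relations (A : comPzRingType) (M : lmodType A) (n : nat) (g : 'I_n -> M)
  : ('I_n -> A) -> Prop :=
  fun c => \sum_(i < n) c i *: g i = 0.

(* F is finitely presented: there is a finite generating family whose module of
   relations is finitely generated (i.e. A^m -> A^n -> F -> 0 exact). *)
Definition finitely_presented (A : comPzRingType) (F : lmodType A) :=
  exists (n : nat) (g : 'I_n -> F),
    (forall f : F, exists c : 'I_n -> A, f = \sum_(i < n) c i *: g i) /\
    fg_subset_free (relations g).

Definition gen_ideal (A : comPzRingType) (m : nat) (s : 'I_m -> A) : A -> Prop :=
  fun a => exists c : 'I_m -> A, a = \sum_(i < m) c i * s i.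

Definition fp_ideal (A : comPzRingType) (I : A -> Prop) :=
  exists (n : nat) (g : 'I_n -> A),
    (forall a, I a <-> exists c : 'I_n -> A, a = \sum_(i < n) c i * g i) /\
    fg_subset_free (fun c : 'I_n -> A => \sum_(i < n) c i * g i = 0).

Definition coherent_ring (A : comPzRingType) :=
  forall (m : nat) (s : 'I_m -> A), fp_ideal (gen_ideal s).

Definition bezout_ring (A : comPzRingType) :=
  forall (m : nat) (s : 'I_m -> A), exists d : A,
    forall a, gen_ideal s a <-> exists e : A, a = e * d.

Definition reduced_ring (A : comPzRingType) :=
  forall (a : A) (k : nat), a ^+ k = 0 -> a = 0.

(* Ext^1_A(F, E) = 0, in Yoneda form: every short exact sequence
   0 -> E -> M -> F -> 0 of A-modules splits. *)
Definition Ext1_vanishes (A : comPzRingType) (F E : lmodType A) :=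
  forall (M : lmodType A) (i : {linear E -> M}) (p : {linear M -> F}),
    injective i -> (forall f : F, exists m : M, p m = f) ->
    (forall m : M, p m = 0 <-> exists e : E, m = i e) ->
    exists r : {linear M -> E}, forall e : E, r (i e) = e.

Definition FP_injective (A : comPzRingType) (E : lmodType A) :=
  forall F : lmodType A, finitely_presented F -> Ext1_vanishes F E.

Definition fg_submodules_cyclic (A : comPzRingType) (E : lmodType A) :=
  forall (n : nat) (g : 'I_n -> E), exists z : E,
    forall x : E, (exists c : 'I_n -> A, x = \sum_(i < n) c i *: g i) <->
                  exists a : A, x = a *: z.

(* Main.v *)
Require Import Defs.
From HB Require Import structures.
From mathcomp Require Import all_boot all_order all_algebra.
From mathcomp Require Import ring.
Import GRing.Theory.
Local Open Scope ring_scope.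

Set Implicit Arguments.
Section Aux.
Variable A : comPzRingType.

Definition pair2 (a b : A) : 'I_2 -> A := fun i => if val i == 0%N then a else b.

Lemma sum2 (V : nmodType) (F : 'I_2 -> V) : \sum_(i < 2) F i = F 0 + F 1.
Proof. rewrite big_ord_recl big_ord1; congr (_ + F _); exact: val_inj. Qed.

Lemma gen2 (a b x : A) : gen_ideal (pair2 a b) x <-> exists p q, x = p * a + q * b.
Proof.
split.
  by case=> c; rewrite sum2 /pair2 /= => ->; exists (c 0), (c 1).
case=> p [q ->]; exists (fun i => if val i == 0%N then p else q).
by rewrite sum2 /pair2.
Qed.

Lemma gen1 (d x : A) : gen_ideal (fun _ : 'I_1 => d) x <-> exists e, x = e * d.
Proof.
split; first by case=> c; rewrite big_ord1 => ->; exists (c 0).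
by case=> e ->; exists (fun _ => e); rewrite big_ord1.
Qed.

Lemma ann_principal (hcoh : coherent_ring A) (hbez : bezout_ring A) (d : A) :
  exists g, g * d = 0 /\ forall t, t * d = 0 -> exists s, t = s * g.
Proof.
have [n [g' [Hgen [m [h Hh]]]]] := hcoh 1 (fun _ => d).
have [e He] : exists e : 'I_n -> A, forall i, g' i = e i * d.
  apply: (@fin_all_exists _ (fun _ => A) (fun i ei => g' i = ei * d)) => i.
  apply/gen1; apply/Hgen.
  exists (fun j => if j == i then 1 else 0).
  rewrite (bigD1 i) //= eqxx mul1r big1 ?addr0 // => j /negbTE ->; exact: mul0r.
have [c Hc] : exists c : 'I_n -> A, d = \sum_(i < n) c i * g' i.
  by apply/Hgen; apply/gen1; exists 1; rewrite mul1r.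
pose k := fun j : 'I_m => \sum_(i < n) h j i * e i.
pose u := \sum_(i < n) c i * e i.
have [g0 Hg0] := hbez m k.
have [g Hg] := hbez 2 (pair2 g0 (1 - u)).
have Hk : forall j, k j * d = 0.
  move=> j; rewrite /k mulr_suml.
  under eq_bigr => i _ do rewrite -mulrA -He.
  apply: (proj2 (Hh (h j))).
  exists (fun j' => if j' == j then 1 else 0) => i.
  rewrite (bigD1 j) //= eqxx mul1r big1 ?addr0 // => j' /negbTE ->; exact: mul0r.
have Hg0d : g0 * d = 0.
  have [cc ->] : exists cc : 'I_m -> A, g0 = \sum_(j < m) cc j * k j.
    by apply/Hg0; exists 1; rewrite mul1r.
  rewrite mulr_suml big1 // => j _; by rewrite -mulrA Hk mulr0.
have Hud : (1 - u) * d = 0.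
  rewrite mulrBl mul1r /u mulr_suml {1}Hc.
  under [X in _ - X]eq_bigr => i _ do rewrite -mulrA -He.
  exact: subrr.
exists g; split.
  have /gen2 [p [q ->]] : gen_ideal (pair2 g0 (1 - u)) g by apply/Hg; exists 1; rewrite mul1r.
  by rewrite mulrDl -!mulrA Hg0d Hud !mulr0 addr0.
move=> t Ht.
apply/Hg; apply/gen2.
have Hrel : relations (M := A^o) (fun i => g' i) (fun i => t * c i).
  rewrite /relations.
  transitivity (t * d); last exact: Ht.
  rewrite Hc mulr_sumr; apply: eq_bigr => i _; by rewrite mulrA.
have [dl Hdl] := proj1 (Hh _) Hrel.
have : gen_ideal k (t * u).
  exists dl; rewrite /u /k mulr_sumr.
  under eq_bigr => i _ do rewrite mulrA Hdl mulr_suml.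
  rewrite exchange_big /=; apply: eq_bigr => j _.
  rewrite mulr_sumr; apply: eq_bigr => i _; by rewrite !mulrA.
move/Hg0 => [e0 He0].
exists e0, t; rewrite -He0; ring.
Qed.

End Aux.
Arguments pair2 {A}.
Arguments gen2 {A}.
Arguments gen1 {A}.

Theorem corollary3p5 (A : comPzRingType) (E : lmodType A)
  (hcoh : coherent_ring A) (hred : reduced_ring A) (hbez : bezout_ring A)
  (hE0 : exists e : E, e != 0)
  (hfpinj : FP_injective E) (hcyc : fg_submodules_cyclic E) :
  forall x y : E, exists (z : E) (B C : 'M[A]_2),
    B *m C = 1%:M /\ C *m B = 1%:M /\
    B 0 0 *: x + B 0 1 *: y = z /\
    B 1 0 *: x + B 1 1 *: y = 0.
Proof.
move=> x y.
have [z Hz] := hcyc 2 (fun i => if val i == 0%N then x else y).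
have [a Ha] : exists a, x = a *: z.
  apply/Hz; exists (fun i => if val i == 0%N then 1 else 0).
  by rewrite sum2 /= scale1r scale0r addr0.
have [b Hb] : exists b, y = b *: z.
  apply/Hz; exists (fun i => if val i == 0%N then 0 else 1).
  by rewrite sum2 /= scale1r scale0r add0r.
have [d Hd] := hbez 2 (pair2 a b).
have [p [q Hdpq]] : exists p q, d = p * a + q * b.
  by apply/gen2; apply/Hd; exists 1; rewrite mul1r.
have [a1 Ha1] : exists a1, a = a1 * d by apply/Hd; apply/gen2; exists 1, 0; ring.
have [b1 Hb1] : exists b1, b = b1 * d by apply/Hd; apply/gen2; exists 0, 1; ring.
have [g [Hgd Hann]] := ann_principal hcoh hbez d.
have [d' Hd'] := hbez 2 (pair2 (a + g) b).
have [p' [q' Hd'pq]] : exists p q, d' = p * (a + g) + q * b.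
  by apply/gen2; apply/Hd'; exists 1; rewrite mul1r.
have [al Hal] : exists al, a + g = al * d' by apply/Hd'; apply/gen2; exists 1, 0; ring.
have [be Hbe] : exists be, b = be * d' by apply/Hd'; apply/gen2; exists 0, 1; ring.
have ag : a * g = 0 by rewrite Ha1 -mulrA (mulrC d) Hgd mulr0.
have reg : forall t, t * d' = 0 -> t = 0.
  move=> t Ht.
  have t1 : t * (a + g) = 0 by rewrite Hal mulrCA Ht mulr0.
  have t2 : t * b = 0 by rewrite Hbe mulrCA Ht mulr0.
  have ta : t * a = 0.
    apply: (hred _ 2).
    have -> : (t * a) ^+ 2 = t * (a + g) * (t * a) - t * t * (a * g) by ring.
    by rewrite t1 ag !mulr0 mul0r subr0.
  have tg : t * g = 0 by move: t1; rewrite mulrDr ta add0r.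
  have td : t * d = 0 by rewrite Hdpq mulrDr mulrCA ta mulr0 add0r mulrCA t2 mulr0.
  have [s Hs] := Hann t td.
  apply: (hred _ 2).
  by rewrite expr2 {1}Hs -mulrA (mulrC g) tg mulr0.
have H1 : p' * al + q' * be = 1.
  have : 1 - (p' * al + q' * be) = 0.
    apply: reg.
    have -> : (1 - (p' * al + q' * be)) * d' = d' - (p' * (al * d') + q' * (be * d')) by ring.
    by rewrite -Hal -Hbe -Hd'pq subrr.
  by move/eqP; rewrite subr_eq0 => /eqP <-.
have gbe : g * be = 0.
  apply: reg; rewrite -mulrA -Hbe Hb1 mulrCA Hgd mulr0 //.
pose B : 'M[A]_2 := \matrix_(i < 2, j < 2)
  if val i == 0%N then (if val j == 0%N then p' else q') else (if val j == 0%N then be else - al).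
pose C : 'M[A]_2 := \matrix_(i < 2, j < 2)
  if val i == 0%N then (if val j == 0%N then al else q') else (if val j == 0%N then be else - p').
exists (p' *: x + q' *: y), B, C.
have E1 : p' * al + q' * be - 1 = 0 by rewrite H1 subrr.
split; [|split; [|split]].
- apply/matrixP => i j; rewrite !mxE sum2 !mxE /=.
  case: i => [[|[|i]] Hi] //; case: j => [[|[|j]] Hj] //=;
  apply/eqP; rewrite -subr_eq0; apply/eqP;
  first [ring | (transitivity (p'*al+q'*be-1); [ring | exact E1])
        | (transitivity (-(p'*al+q'*be-1)); [ring | rewrite E1 oppr0 //])].
- apply/matrixP => i j; rewrite !mxE sum2 !mxE /=.
  case: i => [[|[|i]] Hi] //; case: j => [[|[|j]] Hj] //=;
  apply/eqP; rewrite -subr_eq0; apply/eqP;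
  first [ring | (transitivity (p'*al+q'*be-1); [ring | exact E1])
        | (transitivity (-(p'*al+q'*be-1)); [ring | rewrite E1 oppr0 //])].
- by rewrite !mxE.
- rewrite !mxE /= Ha Hb !scalerA -scalerDl.
  have -> : be * a + - al * b = - (g * be) + be * (a + g) - al * b by ring.
  by rewrite gbe oppr0 add0r Hal Hbe mulrCA subrr scale0r.
Qed.
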